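(* The category $\mathrm{Ar}$ of arities has all finite limits and all (small) colimits.
   Context: Conventions: for endofunctors $F,G$ of ${\mathsf{Set}}$, $F\cdot G$ denotes the composite $F\circ G$ (apply $G$ first); whiskering of a natural transformation $\alpha$ by a functor is written $F\alpha$ or $\alpha F$. An endofunctor of ${\mathsf{Set}}$ is $\omega$-cocontinuous if it preserves colimits of $\omega$-chains; $\mathrm{End}^\omega({\mathsf{Set}})$ is the category of such endofunctors and natural transformations. Modules: let $R=(R,\mu,\eta)$ be a monad on ${\mathsf{Set}}$. An $R$-module (with range ${\mathsf{Set}}$) is a functor $M\colon{\mathsf{Set}}\to{\mathsf{Set}}$ with a natural transformation $\rho^M\colon M\cdot R\to M$ such that $\rho^M\circ \rho^M R=\rho^M\circ M\mu$ and $\rho^M\circ M\eta=1_M$. A morphism of $R$-modules is a natural transformation commuting with the actions. $R$ is itself an $R$-module with action $\mu$. If $f\colon R\to S$ is a monad morphism and $N$ an $S$-module, $f^*N$ denotes the functor $N$ with $R$-action $\rho^N\circ Nf$. $\mathrm{Mon}^\omega$ is the category of monads on ${\mathsf{Set}}$ whose underlying functor is $\omega$-cocontinuous. The big module category $\mathrm{BMod}^\omega$ has objects pairs $(R,M)$ with $R\in\mathrm{Mon}^\omega$ and $M$ an $\omega$-cocontinuous $R$-module, and morphisms $(R,M)\to(S,N)$ pairs $(f,m)$ with $f\colon R\to S$ a monad morphism and $m\colon M\to f^*N$ a morphism of $R$-modules; let $\pi\colon\mathrm{BMod}^\omega\to\mathrm{Mon}^\omega$ be the forgetful functor $(R,M)\mapsto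 R$. An arity is a functor $a\colon\mathrm{Mon}^\omega\to\mathrm{BMod}^\omega$ with $\pi\circ a=\mathrm{id}$. A morphism of arities $a_1\to a_2$ is a natural transformation $m\colon a_1\to a_2$ such that $\pi m$ is the identity natural transformation. This defines the category $\mathrm{Ar}$ (a subcategory of the functor category from $\mathrm{Mon}^\omega$ to $\mathrm{BMod}^\omega$). *)

(* Defs.v *)
From Stdlib Require Import List.
Unset Implicit Arguments.
Unset Strict Implicit.

Definition SET := Type.

Record Functor : Type := {
  fobj :> SET -> SET;
  fmap : forall (A B : SET), (A -> B) -> fobj A -> fobj B;
  fmap_id : forall (A : SET) (x : fobj A), fmap A A (fun a => a) x = x;
  fmap_comp : forall (A B C : SET) (f : A -> B) (g : B -> C) (x : fobj A),
      fmap A C (fun a => g (f a)) x = fmap B C g (fmap A B f x) }.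
Arguments fmap f {A B} _ _ : rename.

Definition is_cocone_chain (X : nat -> SET) (s : forall n, X n -> X (S n))
    (C : SET) (c : forall n, X n -> C) : Prop :=
  forall n (x : X n), c (S n) (s n x) = c n x.

Definition is_colim_chain (X : nat -> SET) (s : forall n, X n -> X (S n))
    (C : SET) (c : forall n, X n -> C) : Prop :=
  is_cocone_chain X s C c /\
  forall (D : SET) (d : forall n, X n -> D), is_cocone_chain X s D d ->
    exists u : C -> D, (forall n x, u (c n x) = d n x) /\
      (forall v : C -> D, (forall n x, v (c n x) = d n x) -> forall y, v y = u y).

Definition omega_cocont (F : Functor) : Prop :=
  forall (X : nat -> SET) (s : forall n, X n -> X (S n)) (C : SET)
         (c : forall n, X n -> C),
    is_colim_chain X s C c ->
    is_colim_chain (fun n => F (X n)) (fun n => fmap F (s n)) (F C)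
                   (fun n => fmap F (c n)).

Record Monad : Type := {
  mfun :> Functor;
  ret : forall A : SET, A -> mfun A;
  join : forall A : SET, mfun (mfun A) -> mfun A;
  ret_nat : forall (A B : SET) (f : A -> B) (x : A),
      fmap mfun f (ret A x) = ret B (f x);
  join_nat : forall (A B : SET) (f : A -> B) (x : mfun (mfun A)),
      fmap mfun f (join A x) = join B (fmap mfun (fmap mfun f) x);
  join_assoc : forall (A : SET) (x : mfun (mfun (mfun A))),
      join A (join (mfun A) x) = join A (fmap mfun (join A) x);
  join_ret_l : forall (A : SET) (x : mfun A), join A (ret (mfun A) x) = x;
  join_ret_r : forall (A : SET) (x : mfun A), join A (fmap mfun (ret A) x) = x }.
Arguments ret m {A} _ : rename.
Arguments join m {A} _ : rename.

Record OMonad : Type := {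
  omon :> Monad;
  omon_omega : omega_cocont omon }.

Record MonMor (R S : Monad) : Type := {
  mm : forall A : SET, R A -> S A;
  mm_nat : forall (A B : SET) (f : A -> B) (x : R A),
      mm B (fmap R f x) = fmap S f (mm A x);
  mm_ret : forall (A : SET) (x : A), mm A (ret R x) = ret S x;
  mm_join : forall (A : SET) (x : R (R A)),
      mm A (join R x) = join S (fmap S (mm A) (mm (R A) x)) }.
Arguments mm {R S} f {A} _ : rename.

Definition MonMor_id (R : Monad) : MonMor R R.
Proof.
  refine (@Build_MonMor R R (fun A x => x) _ _ _).
  - reflexivity.
  - reflexivity.
  - intros A x. now rewrite fmap_id.
Defined.

Definition MonMor_comp (R S T : Monad) (f : MonMor R S) (g : MonMor S T) : MonMor R T.
Proof.
  refine (@Build_MonMor R T (fun A x => mm g (mm f x)) _ _ _).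
  - intros A B h x. now rewrite mm_nat, mm_nat.
  - intros A x. now rewrite mm_ret, mm_ret.
  - intros A x. rewrite mm_join, mm_join, mm_nat.
    f_equal. symmetry. apply (fmap_comp T).
Defined.
Arguments MonMor_comp {R S T} f g.

Record Module (R : Monad) : Type := {
  mod_fun :> Functor;
  act : forall A : SET, mod_fun (R A) -> mod_fun A;
  act_nat : forall (A B : SET) (f : A -> B) (x : mod_fun (R A)),
      act B (fmap mod_fun (fmap R f) x) = fmap mod_fun f (act A x);
  act_assoc : forall (A : SET) (x : mod_fun (R (R A))),
      act A (act (R A) x) = act A (fmap mod_fun (join R (A:=A)) x);
  act_unit : forall (A : SET) (x : mod_fun A),
      act A (fmap mod_fun (ret R (A:=A)) x) = x }.
Arguments act {R} m {A} _ : rename.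

Record OModule (R : Monad) : Type := {
  omod :> Module R;
  omod_omega : omega_cocont omod }.

(* A morphism of R-modules  M -> f^* N , for f : R -> S a monad morphism and
   N an S-module (f^* N has action  act N o N f). *)
Record ModMor (R S : Monad) (f : MonMor R S) (M : Module R) (N : Module S) : Type := {
  modm : forall A : SET, M A -> N A;
  modm_nat : forall (A B : SET) (h : A -> B) (x : M A),
      modm B (fmap M h x) = fmap N h (modm A x);
  modm_act : forall (A : SET) (x : M (R A)),
      modm A (act M x) = act N (fmap N (mm f (A:=A)) (modm (R A) x)) }.
Arguments ModMor {R S} f M N.
Arguments modm {R S f M N} m {A} _ : rename.

(* Arities: functors a : Mon^omega -> BMod^omega with pi o a = id.  Such a
   functor sends R to (R, a_R) and f : R -> S to (f, a_f) with
   a_f : a_R -> f^* a_S; functoriality is stated componentwise. *)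
Record Arity : Type := {
  ar_mod : forall R : OMonad, OModule R;
  ar_map : forall (R S : OMonad) (f : MonMor R S), ModMor f (ar_mod R) (ar_mod S);
  ar_map_id : forall (R : OMonad) (A : SET) (x : ar_mod R A),
      modm (ar_map R R (MonMor_id R)) x = x;
  ar_map_comp : forall (R S T : OMonad) (f : MonMor R S) (g : MonMor S T)
      (A : SET) (x : ar_mod R A),
      modm (ar_map R T (MonMor_comp f g)) x = modm (ar_map S T g) (modm (ar_map R S f) x) }.
Arguments ar_mod a R : rename.
Arguments ar_map a {R S} f : rename.

(* Morphisms of arities: natural transformations m : a -> b with pi m = id,
   i.e. for each R a morphism (id_R, m_R) in BMod, natural in R. *)
Record ArMor (a b : Arity) : Type := {
  arm : forall R : OMonad, ModMor (MonMor_id R) (ar_mod a R) (ar_mod b R);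
  arm_nat : forall (R S : OMonad) (f : MonMor R S) (A : SET) (x : ar_mod a R A),
      modm (ar_map b f) (modm (arm R) x) = modm (arm S) (modm (ar_map a f) x) }.
Arguments arm {a b} m R : rename.

Definition armc (a b : Arity) (m : ArMor a b) (R : OMonad) (A : SET)
    (x : ar_mod a R A) : ar_mod b R A :=
  modm (arm m R) x.
Arguments armc {a b} m {R A} x.

Record SmallCat : Type := {
  cob : SET;
  chom : cob -> cob -> SET;
  cid : forall j, chom j j;
  ccomp : forall i j k, chom i j -> chom j k -> chom i k;
  ccomp_id_l : forall i j (u : chom i j), ccomp i i j (cid i) u = u;
  ccomp_id_r : forall i j (u : chom i j), ccomp i j j u (cid j) = u;
  ccomp_assoc : forall i j k l (u : chom i j) (v : chom j k) (w : chom k l),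
      ccomp i k l (ccomp i j k u v) w = ccomp i j l u (ccomp j k l v w) }.
Arguments chom {J} j k : rename.
Arguments cid {J} j : rename.
Arguments ccomp {J i j k} u v : rename.

Definition finite_cat (J : SmallCat) : Prop :=
  (exists l : list (cob J), forall j, In j l) /\
  (forall j k : cob J, exists l : list (chom j k), forall u, In u l).

(* Diagrams J -> Ar (equality of arity morphisms is componentwise). *)
Record Diagram (J : SmallCat) : Type := {
  dob : cob J -> Arity;
  dhom : forall j k, chom j k -> ArMor (dob j) (dob k);
  dhom_id : forall j (R : OMonad) (A : SET) (x : ar_mod (dob j) R A),
      armc (dhom j j (cid j)) x = x;
  dhom_comp : forall i j k (u : chom i j) (v : chom j k) (R : OMonad) (A : SET)
      (x : ar_mod (dob i) R A),
      armc (dhom i k (ccomp u v)) x = armc (dhom j k v) (armc (dhom i j u) x) }.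
Arguments dob {J} d j : rename.
Arguments dhom {J} d {j k} u : rename.

Definition is_cone (J : SmallCat) (D : Diagram J) (L : Arity)
    (p : forall j, ArMor L (dob D j)) : Prop :=
  forall j k (u : chom j k) (R : OMonad) (A : SET) (x : ar_mod L R A),
    armc (dhom D u) (armc (p j) x) = armc (p k) x.
Arguments is_cone {J} D {L} p.

Definition is_limit (J : SmallCat) (D : Diagram J) (L : Arity)
    (p : forall j, ArMor L (dob D j)) : Prop :=
  is_cone D p /\
  forall (L' : Arity) (p' : forall j, ArMor L' (dob D j)), is_cone D p' ->
    exists u : ArMor L' L,
      (forall j (R : OMonad) (A : SET) (x : ar_mod L' R A),
          armc (p j) (armc u x) = armc (p' j) x) /\
      (forall v : ArMor L' L,
          (forall j (R : OMonad) (A : SET) (x : ar_mod L' R A),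
              armc (p j) (armc v x) = armc (p' j) x) ->
          forall (R : OMonad) (A : SET) (x : ar_mod L' R A), armc v x = armc u x).
Arguments is_limit {J} D {L} p.

Definition is_cocone (J : SmallCat) (D : Diagram J) (C : Arity)
    (q : forall j, ArMor (dob D j) C) : Prop :=
  forall j k (u : chom j k) (R : OMonad) (A : SET) (x : ar_mod (dob D j) R A),
    armc (q k) (armc (dhom D u) x) = armc (q j) x.
Arguments is_cocone {J} D {C} q.

Definition is_colimit (J : SmallCat) (D : Diagram J) (C : Arity)
    (q : forall j, ArMor (dob D j) C) : Prop :=
  is_cocone D q /\
  forall (C' : Arity) (q' : forall j, ArMor (dob D j) C'), is_cocone D q' ->
    exists u : ArMor C C',
      (forall j (R : OMonad) (A : SET) (x : ar_mod (dob D j) R A),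
          armc u (armc (q j) x) = armc (q' j) x) /\
      (forall v : ArMor C C',
          (forall j (R : OMonad) (A : SET) (x : ar_mod (dob D j) R A),
              armc v (armc (q j) x) = armc (q' j) x) ->
          forall (R : OMonad) (A : SET) (x : ar_mod C R A), armc v x = armc u x).
Arguments is_colimit {J} D {C} q.

(* Main.v *)
Require Import Defs.
From Stdlib Require Import List Lia Classical FunctionalExtensionality PropExtensionality IndefiniteDescription Eqdep Eqdep_dec Arith Relation_Operators.

Lemma sig_ext {T : Type} {P : T -> Prop} (x y : sig P) :
  proj1_sig x = proj1_sig y -> x = y.
Proof. destruct x, y; simpl; intros; subst; f_equal; apply proof_irrelevance. Qed.

Section Chain.
Variables (X : nat -> SET) (s : forall n, X n -> X (S n)).
Definition stp (p : sigT X) : sigT X := existT X (S (projT1 p)) (s (projT1 p) (projT2 p)).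
Definition itr (d : nat) (p : sigT X) := Nat.iter d stp p.
Definition rel p q := exists d d', itr d p = itr d' q.
Fixpoint sh n d (x : X n) : X (d + n) :=
  match d with 0 => x | S d' => s (d' + n) (sh n d' x) end.
Lemma itr_sh d n x : itr d (existT X n x) = existT X (d + n) (sh n d x).
Proof. induction d; simpl; [reflexivity|]. unfold itr in *; simpl; rewrite IHd; reflexivity. Qed.
Lemma itr_add a b p : itr (a + b) p = itr a (itr b p).
Proof. induction a; simpl; [reflexivity|]. unfold itr in *; simpl; now rewrite IHa. Qed.
Lemma itr_fst d p : projT1 (itr d p) = d + projT1 p.
Proof. induction d; simpl; [reflexivity|]. unfold itr in *; simpl; now rewrite IHd. Qed.
Lemma rel_refl p : rel p p. Proof. exists 0, 0; reflexivity. Qed.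
Lemma rel_sym p q : rel p q -> rel q p. Proof. intros [d [d' H]]; exists d', d; auto. Qed.
Lemma rel_trans p q r : rel p q -> rel q r -> rel p r.
Proof.
  intros [d [d' H]] [e [e' H']]. exists (e + d), (d' + e').
  rewrite itr_add, H, <- itr_add, Nat.add_comm, itr_add, H', <- itr_add. reflexivity.
Qed.
Lemma rel_itr d p : rel p (itr d p). Proof. exists d, 0; reflexivity. Qed.
Lemma itr_eq_later d e p q : itr d p = itr d q -> itr (e + d) p = itr (e + d) q.
Proof. intros H; rewrite !itr_add, H; reflexivity. Qed.

Definition cc {C : SET} (c : forall n, X n -> C) (p : sigT X) := c (projT1 p) (projT2 p).

Lemma cocone_itr C c : is_cocone_chain X s C c -> forall d p, cc c (itr d p) = cc c p.
Proof.
  intros Hc d p; induction d; [reflexivity|].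
  unfold itr in *; simpl. unfold cc in *; simpl. rewrite Hc. exact IHd.
Qed.
Lemma cocone_rel C c : is_cocone_chain X s C c -> forall p q, rel p q -> cc c p = cc c q.
Proof. intros Hc p q [d [d' H]]. rewrite <- (cocone_itr C c Hc d p), H. apply cocone_itr; auto. Qed.

Lemma colim_surj C c : is_colim_chain X s C c -> forall y, exists p, cc c p = y.
Proof.
  intros [Hc Hu] y.
  destruct (Hu Prop (fun _ _ => True)) as [u [Hu1 Hu2]]; [intros n x; reflexivity|].
  pose proof (Hu2 (fun _ => True) (fun _ _ => eq_refl) y) as E1.
  assert (E2 : (exists p, cc c p = y) = u y).
  { apply (Hu2 (fun y => exists p, cc c p = y)). intros n x.
    apply propositional_extensionality; split; auto. intros _. exists (existT X n x); reflexivity. }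
  rewrite E2, <- E1; exact I.
Qed.

Lemma colim_rel C c : is_colim_chain X s C c -> forall p q, cc c p = cc c q -> rel p q.
Proof.
  intros [Hc Hu] p q E.
  destruct (Hu (sigT X -> Prop) (fun n x => rel (existT X n x))) as [u [Hu1 _]].
  { intros n x. apply functional_extensionality; intro r. apply propositional_extensionality.
    change (existT X (S n) (s n x)) with (itr 1 (existT X n x)). split; intro H.
    - eapply rel_trans; [apply rel_itr|exact H].
    - eapply rel_trans; [apply rel_sym, rel_itr|exact H]. }
  destruct p as [n x], q as [m y]. unfold cc in E; simpl in E.
  assert (H := f_equal u E). rewrite !Hu1 in H.
  rewrite H. apply rel_refl.
Qed.

Lemma char_colim C c : is_cocone_chain X s C c ->
  (forall y, exists p, cc c p = y) -> (forall p q, cc c p = cc c q -> rel p q) ->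
  is_colim_chain X s C c.
Proof.
  intros Hc Hs Hr. split; [exact Hc|]. intros D d Hd.
  exists (fun y => cc d (proj1_sig (constructive_indefinite_description _ (Hs y)))).
  split.
  - intros n x. destruct (constructive_indefinite_description _ _) as [p Hp]; simpl.
    apply (cocone_rel D d Hd p (existT X n x)). apply Hr. exact Hp.
  - intros v Hv y. destruct (constructive_indefinite_description _ _) as [p Hp]; simpl.
    rewrite <- Hp. destruct p; apply Hv.
Qed.

Lemma exists_at p M : projT1 p <= M -> exists x : X M, itr (M - projT1 p) p = existT X M x.
Proof.
  destruct p as [n x]; simpl; intros H. rewrite itr_sh.
  assert (E : M - n + n = M) by lia. generalize (sh n (M - n) x). rewrite E. eauto.
Qed.
End Chain.
Arguments stp {X} s p.
Arguments itr {X} s d p.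
Arguments rel {X} s p q.
Arguments sh {X} s n d x.
Arguments cc {X C} c p.

Section ChainMap.
Variables (X Y : nat -> SET) (s : forall n, X n -> X (S n)) (t : forall n, Y n -> Y (S n))
  (phi : forall n, X n -> Y n) (Hphi : forall n x, phi (S n) (s n x) = t n (phi n x)).
Definition mapS (p : sigT X) : sigT Y := existT Y (projT1 p) (phi _ (projT2 p)).
Lemma mapS_itr d p : mapS (itr s d p) = itr t d (mapS p).
Proof. induction d; [reflexivity|]. unfold itr in *; simpl. rewrite <- IHd. unfold mapS; simpl. now rewrite Hphi. Qed.
Lemma mapS_rel p q : rel s p q -> rel t (mapS p) (mapS q).
Proof. intros [d [d' H]]. exists d, d'. rewrite <- !mapS_itr, H; reflexivity. Qed.
Lemma sh_nat n d x : phi (d + n) (sh s n d x) = sh t n d (phi n x).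
Proof. induction d; simpl; [reflexivity|]. rewrite Hphi, IHd; reflexivity. Qed.
End ChainMap.

Lemma existT_nat_inj (Y : nat -> SET) n (a b : Y n) : existT Y n a = existT Y n b -> a = b.
Proof. apply inj_pair2_eq_dec, Nat.eq_dec. Qed.

Definition ev (Q : nat -> Prop) := exists N, forall M, N <= M -> Q M.
Lemma ev_list {T} (l : list T) (Q : T -> nat -> Prop) :
  (forall a, In a l -> ev (Q a)) -> ev (fun M => forall a, In a l -> Q a M).
Proof.
  induction l; intros H.
  - exists 0; intros M _ a [].
  - destruct (H a (or_introl eq_refl)) as [N1 H1].
    destruct IHl as [N2 H2]; [intros; apply H; right; auto|].
    exists (N1 + N2); intros M HM b [<-|Hb]; [apply H1; lia|apply H2; [lia|auto]].
Qed.

Lemma ev_obj (J : SmallCat) : finite_cat J -> forall Q : cob J -> nat -> Prop,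
  (forall j, ev (Q j)) -> ev (fun M => forall j, Q j M).
Proof.
  intros [[l Hl] _] Q H. destruct (ev_list l Q (fun a _ => H a)) as [N HN].
  exists N; intros M HM j. apply HN; auto.
Qed.

Lemma ev_hom (J : SmallCat) : finite_cat J -> forall Q : forall j k : cob J, chom j k -> nat -> Prop,
  (forall j k u, ev (Q j k u)) -> ev (fun M => forall j k u, Q j k u M).
Proof.
  intros HJ Q H. pose proof HJ as [[l Hl] Hh].
  apply (ev_obj J HJ (fun j M => forall k u, Q j k u M)). intros j.
  apply (ev_obj J HJ (fun k M => forall u, Q j k u M)). intros k.
  destruct (Hh j k) as [lu Hlu].
  destruct (ev_list lu (Q j k) (fun a _ => H j k a)) as [N HN].
  exists N; intros M HM u; apply HN; auto.
Qed.

Section Quot.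
Variables (T : SET) (r : T -> T -> Prop).
Definition gen := clos_refl_sym_trans T r.
Definition Qt : SET := {P : T -> Prop | exists t, P = gen t}.
Definition mk (t : T) : Qt := exist _ (gen t) (ex_intro _ t eq_refl).
Lemma gen_equiv : forall a b c, gen a b -> gen a c -> gen b c.
Proof. intros. eapply rst_trans; [apply rst_sym; eauto| eauto]. Qed.
Lemma mk_eq t t' : gen t t' -> mk t = mk t'.
Proof.
  intros H; apply sig_ext; simpl. apply functional_extensionality; intro z.
  apply propositional_extensionality; split; intro G.
  - eapply gen_equiv; eauto.
  - eapply rst_trans; eauto.
Qed.
Lemma mk_eq_r t t' : r t t' -> mk t = mk t'.
Proof. intros; apply mk_eq, rst_step; auto. Qed.
Lemma mk_inv t t' : mk t = mk t' -> gen t t'.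
Proof.
  intros H. apply (f_equal (@proj1_sig _ _)) in H; simpl in H.
  assert (G : gen t' t') by apply rst_refl. rewrite <- H in G. exact G.
Qed.
Lemma mk_surj (q : Qt) : exists t, q = mk t.
Proof.
  destruct q as [P [t Ht]]. exists t. apply sig_ext; simpl; auto.
Qed.
Definition rep (q : Qt) : T :=
  proj1_sig (constructive_indefinite_description _ (mk_surj q)).
Lemma rep_spec q : q = mk (rep q).
Proof. unfold rep; destruct constructive_indefinite_description; auto. Qed.
Definition lift {Y : SET} (f : T -> Y) (q : Qt) : Y := f (rep q).
Lemma lift_mk {Y : SET} (f : T -> Y) (Hf : forall a b, r a b -> f a = f b) t :
  lift f (mk t) = f (rep (mk t)) .
Proof. reflexivity. Qed.
Lemma gen_resp {Y : SET} (f : T -> Y) (Hf : forall a b, r a b -> f a = f b) a b :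
  gen a b -> f a = f b.
Proof. induction 1; auto; congruence. Qed.
Lemma lift_mk' {Y : SET} (f : T -> Y) (Hf : forall a b, r a b -> f a = f b) t :
  lift f (mk t) = f t.
Proof.
  unfold lift. symmetry. apply (gen_resp f Hf). apply mk_inv. apply rep_spec.
Qed.
End Quot.
Arguments mk {T r} t.
Arguments lift {T r Y} f q.

Definition Qmap {T1 T2 : SET} {r1 : T1 -> T1 -> Prop} {r2 : T2 -> T2 -> Prop}
  (g : T1 -> T2) : Qt T1 r1 -> Qt T2 r2 := lift (fun t => mk (g t)).
Lemma Qmap_mk {T1 T2 : SET} {r1 : T1 -> T1 -> Prop} {r2 : T2 -> T2 -> Prop}
  (g : T1 -> T2) (Hg : forall a b, r1 a b -> r2 (g a) (g b)) t :
  @Qmap T1 T2 r1 r2 g (mk t) = mk (g t).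
Proof. unfold Qmap. rewrite lift_mk'; auto. intros; apply mk_eq_r; auto. Qed.

Lemma existT_sig_ext (I : Type) (B : I -> nat -> SET) (P : forall n, (forall i, B i n) -> Prop)
  a b (x : {f | P a f}) (y : {f | P b f}) : a = b ->
  (forall i, existT (B i) a (proj1_sig x i) = existT (B i) b (proj1_sig y i)) ->
  existT (fun n => {f | P n f}) a x = existT (fun n => {f | P n f}) b y.
Proof.
  intros E H. subst b. f_equal. apply sig_ext. apply functional_extensionality_dep; intro i.
  apply existT_nat_inj, H.
Qed.

Section Lim.
Variables (J : SmallCat) (HJ : finite_cat J) (D : Diagram J).

Definition Lobj (R : OMonad) (A : SET) : SET :=
  {f : forall j, ar_mod (dob D j) R A | forall j k (u : chom j k), armc (dhom D u) (f j) = f k}.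

Definition Lfmap (R : OMonad) (A B : SET) (h : A -> B) (x : Lobj R A) : Lobj R B.
Proof.
  refine (exist _ (fun j => fmap (ar_mod (dob D j) R) h (proj1_sig x j)) _).
  intros j k u. unfold armc. rewrite modm_nat. f_equal. apply (proj2_sig x).
Defined.

Definition LF (R : OMonad) : Functor.
Proof.
  refine (Build_Functor (Lobj R) (Lfmap R) _ _).
  - intros A x. apply sig_ext; simpl. apply functional_extensionality_dep; intro j. apply fmap_id.
  - intros A B C f g x. apply sig_ext; simpl. apply functional_extensionality_dep; intro j. apply fmap_comp.
Defined.

Definition Lact (R : OMonad) (A : SET) (x : Lobj R (R A)) : Lobj R A.
Proof.
  refine (exist _ (fun j => act (ar_mod (dob D j) R) (proj1_sig x j)) _).
  intros j k u. unfold armc. rewrite modm_act. simpl. rewrite fmap_id. f_equal. apply (proj2_sig x).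
Defined.

Definition LM (R : OMonad) : Module R.
Proof.
  refine (Build_Module R (LF R) (Lact R) _ _ _).
  - intros A B f x. apply sig_ext; simpl. apply functional_extensionality_dep; intro j. apply act_nat.
  - intros A x. apply sig_ext; simpl. apply functional_extensionality_dep; intro j. apply act_assoc.
  - intros A x. apply sig_ext; simpl. apply functional_extensionality_dep; intro j. apply act_unit.
Defined.

Lemma LM_omega (R : OMonad) : omega_cocont (LM R).
Proof.
  intros X s C c Hcol.
  assert (Hj : forall j, is_colim_chain (fun n => ar_mod (dob D j) R (X n))
     (fun n => fmap (ar_mod (dob D j) R) (s n)) (ar_mod (dob D j) R C)
     (fun n => fmap (ar_mod (dob D j) R) (c n))).
  { intro j. apply (omod_omega _ (ar_mod (dob D j) R)). exact Hcol. }
  apply char_colim.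
  - intros n x. apply sig_ext; simpl. apply functional_extensionality_dep; intro j.
    apply (proj1 (Hj j)).
  - intros y.
    assert (H1 : forall j, ev (fun M => exists a : ar_mod (dob D j) R (X M),
                  fmap (ar_mod (dob D j) R) (c M) a = proj1_sig y j)).
    { intro j. destruct (colim_surj _ _ _ _ (Hj j) (proj1_sig y j)) as [p Hp].
      exists (projT1 p). intros M HM. destruct (exists_at _ (fun n => fmap (ar_mod (dob D j) R) (s n)) p M HM) as [a Ha].
      exists a. rewrite <- Hp.
      change (fmap (ar_mod (dob D j) R) (c M) a) with
        (cc (fun n => fmap (ar_mod (dob D j) R) (c n)) (existT _ M a)).
      rewrite <- Ha. apply cocone_itr. apply (proj1 (Hj j)). }
    destruct (ev_obj J HJ _ H1) as [M0 HM0].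
    assert (Ha := fun j => constructive_indefinite_description _ (HM0 M0 (le_n _) j)).
    set (a := fun j => proj1_sig (Ha j)).
    assert (Haa : forall j, fmap (ar_mod (dob D j) R) (c M0) (a j) = proj1_sig y j)
      by (intro j; exact (proj2_sig (Ha j))).
    clearbody a. clear Ha H1 HM0.
    assert (H2 : forall j k (u : chom j k), ev (fun E =>
       itr (fun n => fmap (ar_mod (dob D k) R) (s n)) E (existT _ M0 (armc (dhom D u) (a j)))
       = itr (fun n => fmap (ar_mod (dob D k) R) (s n)) E (existT _ M0 (a k)))).
    { intros j k u.
      destruct (colim_rel _ _ _ _ (Hj k) (existT _ M0 (armc (dhom D u) (a j))) (existT _ M0 (a k)))
        as [d [d' Hd]].
      { unfold cc; simpl. rewrite Haa. unfold armc. rewrite <- modm_nat.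
        fold (armc (dhom D u) (fmap (ar_mod (dob D j) R) (c M0) (a j))). rewrite Haa.
        apply (proj2_sig y). }
      assert (E1 := f_equal (@projT1 _ _) Hd). rewrite !itr_fst in E1; simpl in E1.
      assert (d = d') by lia. subst d'.
      exists d. intros E HE. replace E with ((E - d) + d) by lia. apply itr_eq_later; auto. }
    destruct (ev_hom J HJ _ H2) as [E0 HE0].
    specialize (HE0 E0 (le_n _)).
    assert (Hz : forall j k (u : chom j k), armc (dhom D u) (sh (fun n => fmap (ar_mod (dob D j) R) (s n)) M0 E0 (a j)) = sh (fun n => fmap (ar_mod (dob D k) R) (s n)) M0 E0 (a k)).
    { intros j k u. unfold armc.
      rewrite (sh_nat _ _ (fun n => fmap (ar_mod (dob D j) R) (s n)) (fun n => fmap (ar_mod (dob D k) R) (s n)) (fun n => modm (arm (dhom D u) R) (A := X n))).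
      * apply (existT_nat_inj (fun n => ar_mod (dob D k) R (X n))). rewrite <- !itr_sh. apply HE0.
      * intros n x. apply modm_nat. }
    exists (existT (fun n => LM R (X n)) (E0 + M0) (exist _ _ Hz)).
    { unfold cc; simpl. apply sig_ext; simpl. apply functional_extensionality_dep; intro j.
      rewrite <- Haa.
      change (fmap (ar_mod (dob D j) R) (c (E0 + M0)) (sh (fun n => fmap (ar_mod (dob D j) R) (s n)) M0 E0 (a j)))
        with (cc (fun n => fmap (ar_mod (dob D j) R) (c n)) (existT _ (E0 + M0) (sh (fun n => fmap (ar_mod (dob D j) R) (s n)) M0 E0 (a j)))).
      rewrite <- itr_sh. rewrite cocone_itr; [reflexivity|]. apply (proj1 (Hj j)). }
  - intros [n x] [m x'] Hxx. unfold cc in Hxx; simpl in Hxx.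
    assert (H1 : forall j, ev (fun E => m <= E + n /\
       itr (fun n => fmap (ar_mod (dob D j) R) (s n)) E (existT _ n (proj1_sig x j)) =
       itr (fun n => fmap (ar_mod (dob D j) R) (s n)) (E + n - m) (existT _ m (proj1_sig x' j)))).
    { intro j. destruct (colim_rel _ _ _ _ (Hj j) (existT _ n (proj1_sig x j)) (existT _ m (proj1_sig x' j)))
        as [d [d' Hd]].
      { unfold cc; simpl. exact (f_equal (fun z => proj1_sig z j) Hxx). }
      assert (E1 := f_equal (@projT1 _ _) Hd). rewrite !itr_fst in E1; simpl in E1.
      exists (d + m). intros E HE. split; [lia|].
      replace E with ((E - d) + d) at 1 by lia.
      replace (E + n - m) with ((E - d) + d') by lia.
      rewrite !itr_add, Hd. reflexivity. }
    destruct (ev_obj J HJ _ H1) as [E0 HE]. specialize (HE (E0 + m) ltac:(lia)).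
    set (E := E0 + m) in *. exists E, (E + n - m).
    rewrite !itr_sh. apply existT_sig_ext; [lia|].
    intro j. destruct (HE j) as [_ HEj].
    set (phi := fun n0 (z : Lobj R (X n0)) => proj1_sig z j).
    change (proj1_sig (sh (fun n0 => fmap (LM R) (s n0)) n E x) j) with (phi _ (sh (fun n0 => fmap (LM R) (s n0)) n E x)).
    change (proj1_sig (sh (fun n0 => fmap (LM R) (s n0)) m (E + n - m) x') j) with (phi _ (sh (fun n0 => fmap (LM R) (s n0)) m (E + n - m) x')).
    rewrite !(sh_nat _ _ _ (fun n => fmap (ar_mod (dob D j) R) (s n)) phi); [|reflexivity|reflexivity].
    unfold phi. rewrite <- !itr_sh. exact HEj.
Qed.

Definition Lmap0 (R S : OMonad) (f : MonMor R S) (A : SET) (x : Lobj R A) : Lobj S A.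
Proof.
  refine (exist _ (fun j => modm (ar_map (dob D j) f) (proj1_sig x j)) _).
  intros j k u. unfold armc. rewrite <- arm_nat. f_equal. apply (proj2_sig x).
Defined.

Definition Lmap (R S : OMonad) (f : MonMor R S) : ModMor f (LM R) (LM S).
Proof.
  refine (Build_ModMor R S f (LM R) (LM S) (Lmap0 R S f) _ _).
  - intros A B h x. apply sig_ext; simpl. apply functional_extensionality_dep; intro j. apply modm_nat.
  - intros A x. apply sig_ext; simpl. apply functional_extensionality_dep; intro j. apply modm_act.
Defined.

Definition LA : Arity.
Proof.
  refine (Build_Arity (fun R => Build_OModule R (LM R) (LM_omega R)) (fun R S f => Lmap R S f) _ _).
  - intros R A x. apply sig_ext; simpl. apply functional_extensionality_dep; intro j. apply ar_map_id.
  - intros R S T f g A x. apply sig_ext; simpl. apply functional_extensionality_dep; intro j. apply ar_map_comp.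
Defined.

Definition LpM (j : cob J) (R : OMonad) : ModMor (MonMor_id R) (ar_mod LA R) (ar_mod (dob D j) R).
Proof.
  refine (Build_ModMor R R (MonMor_id R) (ar_mod LA R) (ar_mod (dob D j) R)
     (fun A x => proj1_sig x j) _ _).
  - intros; reflexivity.
  - intros A x. simpl. rewrite fmap_id. reflexivity.
Defined.

Definition Lp (j : cob J) : ArMor LA (dob D j).
Proof.
  refine (Build_ArMor LA (dob D j) (LpM j) _). intros; reflexivity.
Defined.

Definition Lmk (R : OMonad) (A : SET) (f : forall j, ar_mod (dob D j) R A)
  (H : forall j k (u : chom j k), armc (dhom D u) (f j) = f k) : Lobj R A := exist _ f H.

Definition LuM (L' : Arity) (p' : forall j, ArMor L' (dob D j)) (Hc : is_cone D p') (R : OMonad) :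
  ModMor (MonMor_id R) (ar_mod L' R) (ar_mod LA R).
Proof.
  refine (Build_ModMor R R (MonMor_id R) (ar_mod L' R) (ar_mod LA R)
      (fun A x => Lmk R A (fun j => armc (p' j) x) (fun j k u => Hc j k u R A x)) _ _).
  + intros A B h x. apply sig_ext; simpl. apply functional_extensionality_dep; intro j. apply modm_nat.
  + intros A x. apply sig_ext; simpl. apply functional_extensionality_dep; intro j. apply modm_act.
Defined.

Definition Lu (L' : Arity) (p' : forall j, ArMor L' (dob D j)) (Hc : is_cone D p') : ArMor L' LA.
Proof.
  refine (Build_ArMor L' LA (LuM L' p' Hc) _).
  intros R S f A x. apply sig_ext; simpl. apply functional_extensionality_dep; intro j. apply arm_nat.
Defined.

Lemma L_is_limit : is_limit D Lp.
Proof.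
  split.
  - intros j k u R A x. exact (proj2_sig x j k u).
  - intros L' p' Hc. exists (Lu L' p' Hc). split.
    * intros j R A x. reflexivity.
    * intros v Hv R A x. apply sig_ext; simpl. apply functional_extensionality_dep; intro j. apply Hv.
Qed.
End Lim.

Section Colim.
Variables (J : SmallCat) (D : Diagram J).

Definition T (R : OMonad) (A : SET) : SET := sigT (fun j => ar_mod (dob D j) R A).
Definition st (R : OMonad) (A : SET) (t t' : T R A) : Prop :=
  exists u : chom (projT1 t) (projT1 t'), projT2 t' = armc (dhom D u) (projT2 t).
Definition Cobj (R : OMonad) (A : SET) : SET := Qt (T R A) (st R A).

Definition mapT (R : OMonad) (A B : SET) (h : A -> B) (t : T R A) : T R B :=
  existT _ (projT1 t) (fmap (ar_mod (dob D (projT1 t)) R) h (projT2 t)).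
Lemma mapT_st R A B h t t' : st R A t t' -> st R B (mapT R A B h t) (mapT R A B h t').
Proof.
  destruct t as [j x], t' as [k y]; unfold st, mapT; simpl. intros [u Hu]; exists u.
  subst y. unfold armc. rewrite modm_nat. reflexivity.
Qed.
Definition Cfmap (R : OMonad) (A B : SET) (h : A -> B) : Cobj R A -> Cobj R B :=
  Qmap (mapT R A B h).
Lemma Cfmap_mk R A B h t : Cfmap R A B h (mk t) = mk (mapT R A B h t).
Proof. apply Qmap_mk, mapT_st. Qed.

Definition CF (R : OMonad) : Functor.
Proof.
  refine (Build_Functor (Cobj R) (Cfmap R) _ _).
  - intros A q. destruct (mk_surj _ _ q) as [t ->]. rewrite Cfmap_mk. f_equal.
    destruct t; unfold mapT; simpl. rewrite fmap_id. reflexivity.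
  - intros A B C f g q. destruct (mk_surj _ _ q) as [t ->]. rewrite !Cfmap_mk. f_equal.
    destruct t; unfold mapT; simpl. rewrite fmap_comp. reflexivity.
Defined.

Definition actT (R : OMonad) (A : SET) (t : T R (R A)) : T R A :=
  existT _ (projT1 t) (act (ar_mod (dob D (projT1 t)) R) (projT2 t)).
Lemma actT_st R A t t' : st R (R A) t t' -> st R A (actT R A t) (actT R A t').
Proof.
  destruct t as [j x], t' as [k y]; unfold st, actT; simpl. intros [u Hu]; exists u.
  subst y. unfold armc. rewrite modm_act. simpl. rewrite fmap_id. reflexivity.
Qed.
Definition Cact (R : OMonad) (A : SET) : Cobj R (R A) -> Cobj R A := Qmap (actT R A).
Lemma Cact_mk R A t : Cact R A (mk t) = mk (actT R A t).
Proof. apply Qmap_mk, actT_st. Qed.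

Definition CM (R : OMonad) : Module R.
Proof.
  refine (Build_Module R (CF R) (Cact R) _ _ _).
  - intros A B f q. destruct (mk_surj _ _ q) as [t ->]. simpl.
    rewrite !Cfmap_mk, !Cact_mk, Cfmap_mk. f_equal.
    destruct t; unfold mapT, actT; simpl. rewrite act_nat. reflexivity.
  - intros A q. destruct (mk_surj _ _ q) as [t ->]. simpl.
    rewrite !Cact_mk, Cfmap_mk, Cact_mk. f_equal.
    destruct t; unfold mapT, actT; simpl. rewrite act_assoc. reflexivity.
  - intros A q. destruct (mk_surj _ _ q) as [t ->]. simpl.
    rewrite Cfmap_mk, Cact_mk. f_equal.
    destruct t; unfold mapT, actT; simpl. rewrite act_unit. reflexivity.
Defined.

Lemma CM_omega (R : OMonad) : omega_cocont (CM R).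
Proof.
  intros X s C c Hcol.
  assert (Hj : forall j, is_colim_chain (fun n => ar_mod (dob D j) R (X n))
     (fun n => fmap (ar_mod (dob D j) R) (s n)) (ar_mod (dob D j) R C)
     (fun n => fmap (ar_mod (dob D j) R) (c n))).
  { intro j. apply (omod_omega _ (ar_mod (dob D j) R)). exact Hcol. }
  set (sC := fun n => fmap (CM R) (s n)).
  assert (same : forall k n x m x', fmap (ar_mod (dob D k) R) (c n) x = fmap (ar_mod (dob D k) R) (c m) x' ->
     rel sC (existT (fun n => CM R (X n)) n (mk (existT _ k x)))
            (existT (fun n => CM R (X n)) m (mk (existT _ k x')))).
  { intros k n x m x' E.
    assert (Hr := colim_rel _ _ _ _ (Hj k) (existT _ n x) (existT _ m x') E).
    apply (mapS_rel _ _ _ sC (fun n a => mk (existT (fun j => ar_mod (dob D j) R (X n)) k a))) in Hr.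
    - exact Hr.
    - intros n0 a. unfold sC. simpl. rewrite Cfmap_mk. reflexivity. }
  assert (claim : forall t t', gen _ (st R C) t t' -> forall n j x m k x',
     t = existT _ j (fmap (ar_mod (dob D j) R) (c n) x) ->
     t' = existT _ k (fmap (ar_mod (dob D k) R) (c m) x') ->
     rel sC (existT (fun n => CM R (X n)) n (mk (existT _ j x)))
            (existT (fun n => CM R (X n)) m (mk (existT _ k x')))).
  { unfold gen. induction 1 as [t0 t1 H|t0|t0 t1 H IH|t0 t1 t2 H1 IH1 H2 IH2]; intros n j a m k a' Ex Ey.
    - subst t0 t1. destruct H as [u Hu]; simpl in u, Hu.
      apply rel_trans with (existT (fun n => CM R (X n)) n (mk (existT _ k (armc (dhom D u) a)))).
      + rewrite (mk_eq_r _ _ (existT _ j a) (existT _ k (armc (dhom D u) a))); [apply rel_refl|].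
        exists u; reflexivity.
      + apply same. unfold armc. rewrite <- modm_nat.
        symmetry; exact Hu.
    - subst t0. assert (Ejk := f_equal (@projT1 _ _) Ey). simpl in Ejk. subst k.
      apply inj_pair2 in Ey. apply same. exact Ey.
    - apply rel_sym. apply IH; auto.
    - destruct t1 as [i w].
      destruct (colim_surj _ _ _ _ (Hj i) w) as [[l z] Hz].
      apply rel_trans with (existT (fun n => CM R (X n)) l (mk (existT _ i z))).
      + apply IH1; auto. rewrite <- Hz. reflexivity.
      + apply IH2; auto. rewrite <- Hz. reflexivity. }
  apply char_colim.
  - intros n q. destruct (mk_surj _ _ q) as [[j x] ->]. unfold sC; simpl. rewrite !Cfmap_mk.
    unfold mapT; simpl. f_equal. f_equal. apply (proj1 (Hj j)).
  - intros w. destruct (mk_surj _ _ w) as [[j y] ->].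
    destruct (colim_surj _ _ _ _ (Hj j) y) as [[n x] Hx].
    exists (existT (fun n => CM R (X n)) n (mk (existT _ j x))).
    unfold cc; simpl. rewrite Cfmap_mk. unfold mapT; simpl. rewrite <- Hx. reflexivity.
  - intros [n w1] [m w2] H. destruct (mk_surj _ _ w1) as [[j x] ->], (mk_surj _ _ w2) as [[k x'] ->].
    unfold cc in H; simpl in H. rewrite !Cfmap_mk in H. apply mk_inv in H.
    eapply claim; [exact H| reflexivity | reflexivity].
Qed.

Definition CmapT (R S : OMonad) (f : MonMor R S) (A : SET) (t : T R A) : T S A :=
  existT _ (projT1 t) (modm (ar_map (dob D (projT1 t)) f) (projT2 t)).
Lemma CmapT_st R S f A t t' : st R A t t' -> st S A (CmapT R S f A t) (CmapT R S f A t').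
Proof.
  destruct t as [j x], t' as [k y]; unfold st, CmapT; simpl. intros [u Hu]; exists u.
  subst y. unfold armc. rewrite arm_nat. reflexivity.
Qed.
Definition Cmap0 (R S : OMonad) (f : MonMor R S) (A : SET) : Cobj R A -> Cobj S A :=
  Qmap (CmapT R S f A).
Lemma Cmap0_mk R S f A t : Cmap0 R S f A (mk t) = mk (CmapT R S f A t).
Proof. apply Qmap_mk, CmapT_st. Qed.

Definition Cmap (R S : OMonad) (f : MonMor R S) : ModMor f (CM R) (CM S).
Proof.
  refine (Build_ModMor R S f (CM R) (CM S) (Cmap0 R S f) _ _).
  - intros A B h q. destruct (mk_surj _ _ q) as [[j x] ->]. simpl.
    rewrite Cfmap_mk, !Cmap0_mk, Cfmap_mk. unfold mapT, CmapT; simpl. rewrite modm_nat. reflexivity.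
  - intros A q. destruct (mk_surj _ _ q) as [[j x] ->]. simpl.
    rewrite Cact_mk, !Cmap0_mk, Cfmap_mk, Cact_mk. unfold mapT, CmapT, actT; simpl. rewrite modm_act. reflexivity.
Defined.

Definition CA : Arity.
Proof.
  refine (Build_Arity (fun R => Build_OModule R (CM R) (CM_omega R)) (fun R S f => Cmap R S f) _ _).
  - intros R A q. destruct (mk_surj _ _ q) as [[j x] ->]. simpl. rewrite Cmap0_mk.
    unfold CmapT; simpl. rewrite ar_map_id. reflexivity.
  - intros R S T0 f g A q. destruct (mk_surj _ _ q) as [[j x] ->]. simpl. rewrite !Cmap0_mk.
    unfold CmapT; simpl. rewrite ar_map_comp. reflexivity.
Defined.

Definition CqM (j : cob J) (R : OMonad) : ModMor (MonMor_id R) (ar_mod (dob D j) R) (ar_mod CA R).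
Proof.
  refine (Build_ModMor R R (MonMor_id R) (ar_mod (dob D j) R) (ar_mod CA R)
     (fun A x => mk (existT (fun j => ar_mod (dob D j) R A) j x)) _ _).
  - intros A B h x. simpl. rewrite Cfmap_mk. reflexivity.
  - intros A x. simpl. rewrite Cfmap_mk, Cact_mk. unfold mapT, actT; simpl. rewrite fmap_id. reflexivity.
Defined.

Definition Cq (j : cob J) : ArMor (dob D j) CA.
Proof.
  refine (Build_ArMor (dob D j) CA (CqM j) _). intros R S f A x. simpl. rewrite Cmap0_mk. reflexivity.
Defined.

Definition Cu0 (C' : Arity) (q' : forall j, ArMor (dob D j) C') (R : OMonad) (A : SET) (t : T R A) : ar_mod C' R A :=
  armc (q' (projT1 t)) (projT2 t).
Lemma Cu0_st C' q' (Hc : is_cocone D q') R A t t' : st R A t t' -> Cu0 C' q' R A t = Cu0 C' q' R A t'.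
Proof.
  destruct t as [j x], t' as [k y]; unfold st, Cu0; simpl. intros [u Hu]. subst y.
  symmetry; apply Hc.
Qed.

Definition CuM (C' : Arity) (q' : forall j, ArMor (dob D j) C') (Hc : is_cocone D q') (R : OMonad) :
  ModMor (MonMor_id R) (ar_mod CA R) (ar_mod C' R).
Proof.
  refine (Build_ModMor R R (MonMor_id R) (ar_mod CA R) (ar_mod C' R)
     (fun A => lift (Cu0 C' q' R A)) _ _).
  - intros A B h q. destruct (mk_surj _ _ q) as [[j x] ->]. simpl.
    rewrite Cfmap_mk, !lift_mk' by (apply Cu0_st; auto). unfold Cu0, mapT; simpl.
    apply modm_nat.
  - intros A q. destruct (mk_surj _ _ q) as [[j x] ->]. simpl.
    rewrite Cact_mk, !lift_mk' by (apply Cu0_st; auto). unfold Cu0, mapT, actT; simpl. unfold armc. rewrite modm_act. simpl. reflexivity.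
Defined.

Definition Cu (C' : Arity) (q' : forall j, ArMor (dob D j) C') (Hc : is_cocone D q') : ArMor CA C'.
Proof.
  refine (Build_ArMor CA C' (CuM C' q' Hc) _).
  intros R S f A q. destruct (mk_surj _ _ q) as [[j x] ->]. simpl.
  rewrite Cmap0_mk, !lift_mk' by (apply Cu0_st; auto). unfold Cu0, CmapT; simpl.
  apply arm_nat.
Defined.

Lemma C_is_colimit : is_colimit D Cq.
Proof.
  split.
  - intros j k u R A x. simpl. symmetry. apply mk_eq_r. exists u. reflexivity.
  - intros C' q' Hc. exists (Cu C' q' Hc). split.
    + intros j R A x. unfold armc; simpl. rewrite lift_mk' by (apply Cu0_st; auto). reflexivity.
    + intros v Hv R A q. destruct (mk_surj _ _ q) as [[j x] ->].
      transitivity (armc (q' j) x); [exact (Hv j R A x)|]. unfold armc; simpl. rewrite lift_mk' by (apply Cu0_st; auto). reflexivity.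
Qed.
End Colim.

Theorem theorem1 :
  (forall J : SmallCat, finite_cat J -> forall D : Diagram J,
     exists (L : Arity) (p : forall j, ArMor L (dob D j)), is_limit D p) /\
  (forall (J : SmallCat) (D : Diagram J),
     exists (C : Arity) (q : forall j, ArMor (dob D j) C), is_colimit D q).
Proof.
  split.
  - intros J HJ D. exists (LA J HJ D), (Lp J HJ D). apply L_is_limit.
  - intros J D. exists (CA J D), (Cq J D). apply C_is_colimit.
Qed.

Print Assumptions theorem1.
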